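(* Let $n\ge1$. A temporal theory $\Gamma$ is $\mathrm{ITL}^{\mathrm{BD}_n}$-consistent if and only if $\Gamma$ is $\mathrm{LTL}$-consistent.
   Context: Fix a countable set $\mathbb{P}$ of atoms. Temporal formulas: $\varphi ::= p\mid\bot\mid\varphi\wedge\varphi\mid\varphi\vee\varphi\mid\varphi\to\varphi\mid\circ\varphi\mid\varphi\,\mathsf{U}\,\varphi\mid\varphi\,\mathsf{R}\,\varphi$. An intuitionistic temporal frame is $(W,\preccurlyeq,S)$ with $W\ne\emptyset$, $\preccurlyeq$ a partial order, $S:W\to W$ forward confluent ($w\preccurlyeq v\Rightarrow S(w)\preccurlyeq S(v)$); persistent if also backward confluent (if $S(w)=v\preccurlyeq u$ then some $t\succcurlyeq w$ has $S(t)=u$). A model adds $V:W\to2^{\mathbb{P}}$ monotone along $\preccurlyeq$. Satisfaction: atoms via $V$; $\bot$ never; $\wedge,\vee$ pointwise; $M,w\models\varphi\to\psi$ iff for all $v\succcurlyeq w$, $M,v\models\varphi$ implies $M,v\models\psi$; $\circ\varphi$ at $w$ iff $\varphi$ at $S(w)$; $\varphi\,\mathsf{U}\,\psi$: some $k\ge0$ with $\psi$ at $S^k(w)$ and $\varphi$ at $S^i(w)$ for all $0\le i<k$; $\varphi\,\mathsf{R}\,\psi$: for all $k\ge0$, $\psi$ at $S^k(w)$ or $\varphi$ at some $S^i(w)$, $0\le i<k$. Depth $\le n$: no chain of $n+1$ pairwise distinct $\preccurlyeq$-related worlds. $\mathrm{ITL}^{\mathrm{BD}_n}$-models are models on persistent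 frames of depth $\le n$; $\mathrm{LTL}$-models are $\mathrm{ITL}^{\mathrm{BD}_1}$-models (i.e. $\preccurlyeq$ is the identity). $\Gamma$ is $\mathsf{L}$-consistent if there exist an $\mathsf{L}$-model $M$ and a world $w$ with $M,w\models\gamma$ for all $\gamma\in\Gamma$. *)

(* Defs.v *)
From Stdlib Require Import Arith.

(* Atoms: the countable set P is represented by nat. *)
Inductive form : Type :=
| Var : nat -> form
| Bot : form
| And : form -> form -> form
| Or : form -> form -> form
| Imp : form -> form -> form
| Next : form -> form
| Until : form -> form -> form
| Release : form -> form -> form.

Record model : Type := {
  W : Type;
  le : W -> W -> Prop;
  S : W -> W;
  V : W -> nat -> Prop;
  W_inhabited : inhabited W;
  le_refl : forall w, le w w;
  le_trans : forall u v w, le u v -> le v w -> le u w;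
  le_antisym : forall u v, le u v -> le v u -> u = v;
  forward_confluent : forall w v, le w v -> le (S w) (S v);
  V_monotone : forall w v p, le w v -> V w p -> V v p
}.

Definition Siter (M : model) (k : nat) (w : W M) : W M := Nat.iter k (S M) w.

Fixpoint sat (M : model) (w : W M) (phi : form) {struct phi} : Prop :=
  match phi with
  | Var p => V M w p
  | Bot => False
  | And a b => sat M w a /\ sat M w b
  | Or a b => sat M w a \/ sat M w b
  | Imp a b => forall v, le M w v -> sat M v a -> sat M v b
  | Next a => sat M (S M w) a
  | Until a b => exists k, sat M (Siter M k w) b /\
                   forall i, i < k -> sat M (Siter M i w) a
  | Release a b => forall k, sat M (Siter M k w) b \/
                   exists i, i < k /\ sat M (Siter M i w) a
  end.

Definition persistent (M : model) : Prop :=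
  forall w u, le M (S M w) u -> exists t, le M w t /\ S M t = u.

(* Depth <= n: no chain of n+1 pairwise distinct, pairwise le-related worlds
   (indexed by 0..n). *)
Definition depth_le (M : model) (n : nat) : Prop :=
  ~ exists f : nat -> W M,
      (forall i j, i <= n -> j <= n -> i <> j -> f i <> f j) /\
      (forall i j, i <= n -> j <= n -> le M (f i) (f j) \/ le M (f j) (f i)).

Definition ITL_BD_model (n : nat) (M : model) : Prop :=
  persistent M /\ depth_le M n.

Definition LTL_model (M : model) : Prop := ITL_BD_model 1 M.

Definition theory := form -> Prop.

Definition ITL_BD_consistent (n : nat) (Gamma : theory) : Prop :=
  exists (M : model) (w : W M), ITL_BD_model n M /\
    forall g, Gamma g -> sat M w g.

Definition LTL_consistent (Gamma : theory) : Prop :=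
  exists (M : model) (w : W M), LTL_model M /\
    forall g, Gamma g -> sat M w g.

(* Main.v *)
Require Import Defs.
From Stdlib Require Import Arith Lia Classical.

Definition maximal (M : model) (v : W M) : Prop := forall u, le M v u -> u = v.

Lemma Siter_mono (M : model) k : forall w v, le M w v -> le M (Siter M k w) (Siter M k v).
Proof.
  induction k; intros w v H; simpl; auto.
  unfold Siter in *; simpl. apply forward_confluent. apply IHk; auto.
Qed.

Lemma sat_mono (M : model) phi : forall w v, le M w v -> sat M w phi -> sat M v phi.
Proof.
  induction phi; intros w v H; simpl; intros Hs.
  - eapply V_monotone; eauto.
  - auto.
  - destruct Hs; split; eauto.
  - destruct Hs; [left|right]; eauto.
  - intros u Hu. apply Hs. eapply le_trans; eauto.
  - eapply IHphi; [apply forward_confluent; eauto| auto].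
  - destruct Hs as [k [H1 H2]]. exists k. split.
    + eapply IHphi2; [apply Siter_mono; eauto| auto].
    + intros i Hi. eapply IHphi1; [apply Siter_mono; eauto| auto].
  - intros k. destruct (Hs k) as [H1|[i [Hi H2]]].
    + left. eapply IHphi2; [apply Siter_mono; eauto| auto].
    + right. exists i. split; auto. eapply IHphi1; [apply Siter_mono; eauto| auto].
Qed.

Lemma max_S (M : model) : persistent M -> forall v, maximal M v -> maximal M (S M v).
Proof.
  intros P v Hv u Hu. destruct (P v u Hu) as [t [Ht Et]].
  rewrite (Hv t Ht) in Et. auto.
Qed.

Lemma chain_exists (M : model) (w : W M) :
  (forall v, le M w v -> ~ maximal M v) ->
  forall m, exists f : nat -> W M,
    (forall i, i <= m -> le M w (f i)) /\
    (forall i j, i < j -> j <= m -> le M (f i) (f j) /\ f i <> f j).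
Proof.
  intros Hn m. induction m.
  - exists (fun _ => w). split; [intros; apply le_refl| intros; lia].
  - destruct IHm as [f [Hw Hc]].
    assert (Hnm := Hn (f m) (Hw m (le_n m))).
    unfold maximal in Hnm. apply not_all_ex_not in Hnm. destruct Hnm as [u Hu].
    apply imply_to_and in Hu. destruct Hu as [Hu1 Hu2].
    exists (fun i => if i <=? m then f i else u). split.
    + intros i Hi. destruct (Nat.leb_spec i m); auto.
      eapply le_trans; [apply Hw; eauto| auto].
    + intros i j Hij Hj. destruct (Nat.leb_spec i m); [|lia].
      destruct (Nat.leb_spec j m); [apply Hc; lia|].
      assert (Hle : le M (f i) (f m)).
      { destruct (Nat.eq_dec i m) as [->|]; [apply le_refl| apply Hc; lia]. }
      split. { eapply le_trans; eauto. }
      intros E. rewrite E in Hle. apply Hu2. apply le_antisym; auto.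
Qed.

Lemma max_above (M : model) (n : nat) (w : W M) :
  depth_le M n -> exists v, le M w v /\ maximal M v.
Proof.
  intros D. apply NNPP. intros Hno.
  assert (Hn : forall v, le M w v -> ~ maximal M v).
  { intros v H1 H2. apply Hno. eauto. }
  destruct (chain_exists M w Hn n) as [f [_ Hc]].
  apply D. exists f. split.
  - intros i j Hi Hj Hij E.
    destruct (Nat.lt_gt_cases i j) as [[H|H] _]; auto.
    + apply (proj2 (Hc i j H Hj)); auto.
    + apply (proj2 (Hc j i H Hi)); auto.
  - intros i j Hi Hj.
    destruct (Nat.lt_total i j) as [H|[H|H]].
    + left. apply (Hc i j H Hj).
    + subst. left. apply le_refl.
    + right. apply (Hc j i H Hi).
Qed.

Section Sub.
Variable M : model.
Hypothesis P : persistent M.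
Variable v0 : W M.
Hypothesis Hv0 : maximal M v0.

Definition SW := { v : W M | maximal M v }.
Definition SS (x : SW) : SW := exist _ (S M (proj1_sig x)) (max_S M P _ (proj2_sig x)).

Definition subM : model.
Proof.
  refine {| W := SW; le := @eq SW; S := SS;
            V := fun x p => V M (proj1_sig x) p |}.
  - exact (inhabits (exist _ v0 Hv0)).
  - reflexivity.
  - intros; subst; reflexivity.
  - auto.
  - intros; subst; reflexivity.
  - intros; subst; auto.
Defined.

Lemma Siter_sub k (x : SW) : proj1_sig (Siter subM k x) = Siter M k (proj1_sig x).
Proof.
  induction k; [reflexivity|]. unfold Siter in *. simpl.
  change (S M (proj1_sig (Nat.iter k SS x)) = S M (Nat.iter k (S M) (proj1_sig x))).
  change (proj1_sig (Nat.iter k SS x) = Nat.iter k (S M) (proj1_sig x)) in IHk.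
  rewrite IHk. reflexivity.
Qed.

Lemma sat_sub phi : forall x : SW, sat subM x phi <-> sat M (proj1_sig x) phi.
Proof.
  induction phi; intros x; simpl.
  - tauto.
  - tauto.
  - rewrite IHphi1, IHphi2; tauto.
  - rewrite IHphi1, IHphi2; tauto.
  - split.
    + intros H u Hu. pose proof (proj2_sig x u Hu) as E. subst u.
      intros Ha. apply IHphi2. apply (H x eq_refl). apply IHphi1; auto.
    + intros H u Hu Ha. simpl in Hu. subst u. apply IHphi2. apply H.
      apply le_refl. apply IHphi1; auto.
  - apply IHphi.
  - split; intros [k [H1 H2]]; exists k; split.
    + rewrite <- Siter_sub. apply IHphi2; auto.
    + intros i Hi. rewrite <- Siter_sub. apply IHphi1; auto.
    + apply IHphi2. rewrite Siter_sub. auto.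
    + intros i Hi. apply IHphi1. rewrite Siter_sub. auto.
  - split; intros H k; destruct (H k) as [H1|[i [Hi H2]]].
    + left. rewrite <- Siter_sub. apply IHphi2; auto.
    + right. exists i. split; auto. rewrite <- Siter_sub. apply IHphi1; auto.
    + left. apply IHphi2. rewrite Siter_sub. auto.
    + right. exists i. split; auto. apply IHphi1. rewrite Siter_sub. auto.
Qed.

Lemma subM_LTL : LTL_model subM.
Proof.
  split.
  - intros w u H. exists w. split; [reflexivity| exact H].
  - intros [f [Hd Hc]]. destruct (Hc 0 1) as [E|E]; try lia;
    apply (Hd 0 1); auto; simpl in E; congruence.
Qed.
End Sub.

Lemma depth_mono (M : model) n : 1 <= n -> depth_le M 1 -> depth_le M n.
Proof.
  intros Hn D [f [Hd Hc]]. apply D. exists f. split; intros; [apply Hd|apply Hc]; lia.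
Qed.

Theorem lemma4p6 (n : nat) (Gamma : theory) :
  1 <= n -> (ITL_BD_consistent n Gamma <-> LTL_consistent Gamma).
Proof.
  intros Hn. split.
  - intros [M [w [[P D] HG]]].
    destruct (max_above M n w D) as [v [Hwv Hv]].
    exists (subM M P v Hv), (exist _ v Hv). split.
    + apply subM_LTL.
    + intros g Hg. apply sat_sub. simpl. eapply sat_mono; eauto.
  - intros [M [w [[P D] HG]]]. exists M, w. split; [split|]; auto.
    apply depth_mono; auto.
Qed.
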